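(* Fix $m\ge 1$, a partition $\xi$ with all parts $\le m$, and $\mu\in\mathbb Z_{\ge0}$ with $\mu=\mu_1m+\mu_0$, $0\le\mu_0<m$. Let $t=\#\{i:\xi_i=m\}$ and assume $k:=\mu_1+1-t\ge 0$. Let $\alpha_0:=m-\mu_0-1$ and let $\alpha_1,\dots,\alpha_L$ be the parts of $\xi$ strictly smaller than $m$, listed with multiplicity, so that \[ F_{\xi,m,\mu}(x)=\frac{p_{m-\mu_0-1}(x)p_\xi(x)}{p_m(x)^{\mu_1+1}}=\frac{\prod_{i=0}^L p_{\alpha_i}(x)}{p_m(x)^k}=\sum_{r\ge0}a_rx^r. \] Then for every $r\ge 0$, \[ a_r=\sum_{\substack{j_0,\dots,j_L\ge 0,\ u_1,\dots,u_k\ge 0\\ j_0+\cdots+j_L+u_1+\cdots+u_k=r}}(-1)^{j_0+\cdots+j_L}\left(\prod_{i=0}^L\binom{\alpha_i-j_i}{j_i}\right)\left(\prod_{\nu=1}^kB_m(u_\nu)\right), \] where the second product is $1$ if $k=0$. Equivalently, $a_r$ is the signed count of tuples $(M_0,\dots,M_L,\gamma_1,\dots,\gamma_k)$ such that each $M_i$ is a matching in the path graph $P_{\alpha_i}$, each $\gamma_\nu$ is a full-height strip walk of height $m-1$, $|M_0|+\cdots+|M_L|+e(\gamma_1)+\cdots+e(\gamma_k)=r$, and each tuple is counted with sign $(-1)^{|M_0|+\cdots+|M_L|}$.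
   Context: $p_0=p_1=1$, $p_{r+1}(x)=p_r(x)-xp_{r-1}(x)$ ($r\ge1$); $p_\xi=\prod_i p_{\xi_i}$. Convention: $\binom{A}{B}=0$ unless $0\le B\le A$. For $r\ge0$, $P_r$ is the path graph on vertices $1,\dots,r$ with edges $\{i,i+1\}$, $1\le i<r$ ($P_0$ empty); a matching is a set of pairwise disjoint edges, $|M|$ its number of edges. For $m\ge1$ and $0\le a,b\le m-1$, a strip walk of height $m-1$ from $a$ to $b$ of length $L$ is a sequence $(h_0,\dots,h_L)$ of integers with $h_0=a$, $h_L=b$, $h_{i+1}-h_i\in\{\pm1\}$, and $0\le h_i\le m-1$ for all $i$; $w^{(m)}_L(a,b)$ denotes the number of them. A full-height strip walk is one from $0$ to $m-1$; its excess is $e(\gamma)=(L-(m-1))/2$. $B_m(u):=w^{(m)}_{m-1+2u}(0,m-1)$, the number of full-height strip walks of excess $u$. *)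

(* Defs.v *)
From mathcomp Require Import all_boot all_order all_algebra.
Set Implicit Arguments. Unset Strict Implicit. Unset Printing Implicit Defensive.
Import Order.TTheory GRing.Theory Num.Theory.
Local Open Scope ring_scope.

Fixpoint pp (r : nat) : {poly int} :=
  match r with
  | 0%N => 1
  | r1.+1 => match r1 with
             | 0%N => 1
             | r2.+1 => pp r1 - 'X * pp r2
             end
  end.

Definition pxi (xi : seq nat) : {poly int} := \prod_(a <- xi) pp a.

(* First n coefficients of the formal power series num/den, for den with
   constant coefficient 1: a_n = num_n - sum_{i=1}^{n} den_i a_{n-i}. *)
Fixpoint sdiv_seq (num den : {poly int}) (n : nat) : seq int :=
  match n with
  | 0%N => [::]
  | n'.+1 => let s := sdiv_seq num den n' in
             rcons s (num`_n' - \sum_(1 <= i < n'.+1) den`_i * s`_(n' - i))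
  end.

Definition fps_coef (num den : {poly int}) (r : nat) : int :=
  (sdiv_seq num den r.+1)`_r.

Definition walk_count (m len a b : nat) : nat :=
  #|[set h : {ffun 'I_len.+1 -> 'I_m} |
      [&& nat_of_ord (h ord0) == a, nat_of_ord (h ord_max) == b &
          [forall i : 'I_len,
              (nat_of_ord (h (inord i.+1)) == (h (inord i)).+1) ||
              ((h (inord i.+1)).+1 == nat_of_ord (h (inord i)))]]]|.

Definition Bm (m u : nat) : nat := walk_count m (m.-1 + u.*2) 0 m.-1.

(* Path graph P_n on vertices 0..n-1 (a relabelling of 1..n); an edge {i,i+1}
   is encoded as the pair (i, i+1). A matching is a set of edges that are
   pairwise vertex-disjoint. *)
Definition is_matching (n : nat) (M : {set 'I_n * 'I_n}) : bool :=
  [forall e in M, nat_of_ord e.2 == (nat_of_ord e.1).+1] &&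
  [forall e1 in M, forall e2 in M, (e1 != e2) ==>
     [&& e1.1 != e2.1, e1.1 != e2.2, e1.2 != e2.1 & e1.2 != e2.2]].

Definition n_matchings (n j : nat) : nat :=
  #|[set M : {set 'I_n * 'I_n} | is_matching M && (#|M| == j)]|.

(* Main.v *)
Require Import Defs.
From mathcomp Require Import all_boot all_order all_algebra.
From mathcomp Require Import zify.
Set Implicit Arguments. Unset Strict Implicit. Unset Printing Implicit Defensive.
Import Order.TTheory GRing.Theory Num.Theory.

Open Scope ring_scope.

Definition ffsnoc (T : Type) n (g : {ffun 'I_n -> T}) (x : T) : {ffun 'I_n.+1 -> T} :=
  [ffun i => if unlift ord_max i is Some j then g j else x].

Lemma ffsnoc_max (T : Type) n (g : {ffun 'I_n -> T}) x : ffsnoc g x ord_max = x.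
Proof. by rewrite ffunE unlift_none. Qed.

Lemma ffsnoc_widen (T : Type) n (g : {ffun 'I_n -> T}) x (i : 'I_n) :
  ffsnoc g x (widen_ord (leqnSn n) i) = g i.
Proof.
rewrite ffunE; case: unliftP => [j /(congr1 val) /= | /(congr1 val) /= ].
  by rewrite /bump leqNgt ltn_ord /= add0n => /val_inj ->.
by move=> e; move: (ltn_ord i); rewrite e ltnn.
Qed.

Lemma big_ffsnoc (R : Type) (idx : R) (op : Monoid.com_law idx) (T : finType) n
  (F : {ffun 'I_n.+1 -> T} -> R) :
  \big[op/idx]_(f : {ffun 'I_n.+1 -> T}) F f =
  \big[op/idx]_(g : {ffun 'I_n -> T}) \big[op/idx]_(x : T) F (ffsnoc g x).
Proof.
rewrite pair_big /=.
rewrite (reindex (fun p : {ffun 'I_n -> T} * T => ffsnoc p.1 p.2)) //.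
exists (fun f : {ffun 'I_n.+1 -> T} => ([ffun i => f (widen_ord (leqnSn n) i)], f ord_max)).
  move=> [g x] _ /=; congr pair; last by rewrite ffsnoc_max.
  by apply/ffunP => i; rewrite ffunE ffsnoc_widen.
move=> f _ /=; apply/ffunP => i; rewrite ffunE.
case: unliftP => [j -> | ->] //; rewrite ffunE; congr (f _); apply: val_inj => /=.
by rewrite /bump leqNgt ltn_ord.
Qed.

Lemma big_ord_ffsnoc (R : Type) (idx : R) (op : Monoid.law idx) (T : Type) n
  (g : {ffun 'I_n -> T}) x (F : 'I_n.+1 -> T -> R) :
  \big[op/idx]_(i < n.+1) F i (ffsnoc g x i) =
  op (\big[op/idx]_(i < n) F (widen_ord (leqnSn n) i) (g i)) (F ord_max x).
Proof.
rewrite big_ord_recr /= ffsnoc_max; congr (op _ _); apply: eq_bigr => i _.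
by rewrite ffsnoc_widen.
Qed.

Open Scope ring_scope.

Lemma coef_prod_ffun (L N n : nat) (P : 'I_L -> {poly int}) : (n <= N)%N ->
  (\prod_(i < L) P i)`_n =
  \sum_(f : {ffun 'I_L -> 'I_N.+1} | (\sum_(i < L) (f i : nat) == n)%N)
     \prod_(i < L) (P i)`_(f i).
Proof.
elim: L P n => [|L IH] P n nN.
  rewrite big_ord0 coefC.
  rewrite (eq_bigl (fun _ => n == 0%N)); last by move=> f; rewrite big_ord0 eq_sym.
  rewrite (eq_bigr (fun _ => 1)); last by move=> f _; rewrite big_ord0.
  case: eqP => [_|_]; last by rewrite big_pred0.
  by rewrite sumr_const card_ffun (card_ord 0).
rewrite (big_ord_recr L) /= coefM.
rewrite (eq_bigr (fun j : 'I_n.+1 => \sum_(g : {ffun 'I_L -> 'I_N.+1} | (\sum_(i < L) (g i : nat) == j)%N)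
     (\prod_(i < L) (P (widen_ord (leqnSn L) i))`_(g i)) * (P ord_max)`_(n - j))); last first.
  move=> j _; rewrite IH ?mulr_suml //; apply: leq_trans nN; rewrite -ltnS; exact: ltn_ord.
rewrite (exchange_big_dep xpredT) //=.
rewrite [RHS]big_mkcond /= big_ffsnoc /=; apply: eq_bigr => g _.
rewrite (eq_bigl (fun j : 'I_n.+1 => (j : nat) == \sum_(i < L) (g i : nat))%N); last by move=> j; rewrite eq_sym.
rewrite (big_ord1_eq _ (fun j => \prod_(i < L) (P (widen_ord (leqnSn L) i))`_(g i) * (P ord_max)`_(n - j))).
rewrite (eq_bigr (fun x : 'I_N.+1 => if ((x : nat) == n - \sum_(i < L) (g i : nat))%N then
   (if (\sum_(i < L) (g i : nat) <= n)%N then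
     \prod_(i < L) (P (widen_ord (leqnSn L) i))`_(g i) * (P ord_max)`_x else 0) else 0)); last first.
  move=> x _.
  rewrite (big_ord_ffsnoc _ _ _ (fun _ (y : 'I_N.+1) => nat_of_ord y)).
  rewrite (big_ord_ffsnoc _ _ _ (fun i (y : 'I_N.+1) => (P i)`_y)) /=.
  set s := (\sum_(i < L) _)%N.
  case: (leqP s n) => sn.
    have -> : (s + x == n)%N = ((x : nat) == n - s)%N.
      by apply/eqP/eqP => [<-|->]; rewrite ?addKn // subnKC.
    by case: eqP.
  have -> : (s + x == n)%N = false by apply/negbTE; apply/eqP; lia.
  by case: eqP.
rewrite -big_mkcond /=.
rewrite (big_ord1_eq _ (fun i : nat => if (\sum_(i0 < L) g i0 <= n)%N
      then \prod_(i0 < L) (P (widen_ord (leqnSn L) i0))`_(g i0) * (P ord_max)`_i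
      else 0)).
have -> : (n - \sum_(i0 < L) g i0 < N.+1)%N by rewrite ltnS (leq_trans (leq_subr _ _) nN).
by rewrite ltnS.
Qed.

Open Scope ring_scope.

Lemma ppSS a : pp a.+2 = pp a.+1 - 'X * pp a.
Proof. by []. Qed.

Lemma binom_step a i : 'C(a.+1 - i, i.+1) = ('C(a - i, i.+1) + 'C(a - i, i))%N.
Proof.
case: (leqP i a) => ia.
  by rewrite subSn // binS.
have e1 : (a.+1 - i = 0)%N by lia.
have e2 : (a - i = 0)%N by lia.
by rewrite e1 e2 !bin0n; case: i ia {e1 e2}.
Qed.

Lemma coef_pp a j : (pp a)`_j = (-1) ^+ j * ('C(a - j, j))%:Z.
Proof.
suff H : forall a, (forall j, (pp a)`_j = (-1) ^+ j * ('C(a - j, j))%:Z) /\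
                   (forall j, (pp a.+1)`_j = (-1) ^+ j * ('C(a.+1 - j, j))%:Z).
  by case: (H a).
elim=> [|b [IH1 IH2]].
  split=> k; rewrite /= coefC; case: k => [|[|k]] //=; rewrite ?bin0n ?mulr0 //.
split=> // k; rewrite ppSS coefB coefXM IH2.
case: k => [|i] /=; first by rewrite subr0.
rewrite IH1 subSS subSS binom_step exprS mulN1r PoszD.
by rewrite !mulNr mulrDr opprD.
Qed.

Close Scope ring_scope.

Lemma card_set_sum (T : finType) (P : pred T) : #|[set x | P x]| = \sum_x (P x : nat).
Proof.
rewrite -sum1_card big_mkcond /=; apply: eq_bigr => x _; rewrite inE; by case: (P x).
Qed.

Lemma forall_ord_recr n (Q : 'I_n.+1 -> bool) :
  [forall i, Q i] = [forall i : 'I_n, Q (widen_ord (leqnSn n) i)] && Q ord_max.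
Proof.
apply/forallP/andP => [H|[/forallP H1 H2] i].
  by split=> //; apply/forallP => i.
case: (unliftP ord_max i) => [j ->|->] //.
suff -> : lift ord_max j = widen_ord (leqnSn n) j by [].
by apply: val_inj; rewrite /= /bump leqNgt ltn_ord.
Qed.

Definition step (u v : nat) := (u == v.+1) || (u.+1 == v).

Definition wf m n (h : {ffun 'I_n.+1 -> 'I_m}) :=
  [forall i : 'I_n, step (h (inord i.+1)) (h (inord i))].

Lemma walk_countE m len a b :
  walk_count m len a b = \sum_(h : {ffun 'I_len.+1 -> 'I_m})
     [&& nat_of_ord (h ord0) == a, nat_of_ord (h ord_max) == b & wf h].
Proof. by rewrite /walk_count card_set_sum. Qed.

Lemma inord_widen n k : (k <= n)%N ->
  (inord k : 'I_n.+2) = widen_ord (leqnSn n.+1) (inord k : 'I_n.+1).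
Proof.
move=> kn; apply: val_inj => /=; rewrite inordK; last by lia.
by rewrite inordK //; lia.
Qed.

Lemma wf_ffsnoc m N (g : {ffun 'I_N.+1 -> 'I_m}) x :
  wf (ffsnoc g x) = wf g && step x (g ord_max).
Proof.
rewrite /wf forall_ord_recr; congr andb.
  apply: eq_forallb => i /=.
  have h1 : (i.+1 <= N)%N by exact: ltn_ord.
  have h2 : (i <= N)%N by exact: ltnW.
  rewrite (inord_widen h1) (inord_widen h2).
  by rewrite !ffsnoc_widen.
have -> : (inord (ord_max : 'I_N.+1).+1 : 'I_N.+2) = ord_max.
  by apply: val_inj; rewrite /= inordK.
rewrite ffsnoc_max (inord_widen (k:=N)) // ffsnoc_widen; congr step; congr (nat_of_ord (g _)).
by apply: val_inj; rewrite /= inordK.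
Qed.

Close Scope ring_scope.

Lemma step_split m b c : (c < m)%N -> (step b c : nat) =
   (((0 < b) && (c == b.-1)) : nat) + (((b.+1 < m) && (c == b.+1)) : nat).
Proof.
move=> cm; rewrite /step.
case: (posnP b) => [->|bp]; case: (ltnP b.+1 m) => bm /=;
  repeat case: eqP => /=; lia.
Qed.

Lemma ord0_widen n : (ord0 : 'I_n.+2) = widen_ord (leqnSn n.+1) ord0.
Proof. by apply: val_inj. Qed.

Lemma sum_ord_eq m b (Q : nat -> bool) : (b < m)%N ->
  \sum_(x < m) (((x == b :> nat) && Q x) : nat) = Q b.
Proof.
move=> bm.
rewrite (eq_bigr (fun x : 'I_m => if (x == b :> nat) then (Q x : nat) else 0%N)); last first.
  by move=> x _; case: eqP.
by rewrite -big_mkcond /= (big_ord1_eq _ (fun x => (Q x : nat))) bm.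
Qed.

Lemma walkS m N b : (b < m)%N ->
  walk_count m N.+1 0 b =
  ((if (0 < b)%N then walk_count m N 0 b.-1 else 0) +
   (if (b.+1 < m)%N then walk_count m N 0 b.+1 else 0))%N.
Proof.
move=> bm; rewrite walk_countE big_ffsnoc.
rewrite (eq_bigr (fun g : {ffun 'I_N.+1 -> 'I_m} =>
   ((nat_of_ord (g ord0) == 0%N) && wf g) * step b (g ord_max))%N); last first.
  move=> g _.
  rewrite (eq_bigr (fun x : 'I_m => (((x == b :> nat) &&
     (((nat_of_ord (g ord0) == 0%N) && wf g) && step x (g ord_max))) : nat))); last first.
    move=> x _; rewrite ord0_widen ffsnoc_widen ffsnoc_max wf_ffsnoc.
    by case: (_ == 0%N); case: (_ == b); case: (wf g).
  rewrite (sum_ord_eq (fun x => ((nat_of_ord (g ord0) == 0%N) && wf g) && step x (g ord_max))) //.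
  by rewrite mulnb.
under eq_bigr do rewrite (step_split b (ltn_ord _)) mulnDr.
rewrite big_split /=; congr addn.
  case: (posnP b) => [->|bp] /=.
    by rewrite big1 // => g _; rewrite muln0.
  rewrite walk_countE; apply: eq_bigr => g _.
  by case: (_ == 0%N); case: (_ == b.-1); case: (wf g).
case: (ltnP b.+1 m) => bm1 /=.
  rewrite walk_countE; apply: eq_bigr => g _.
  by case: (_ == 0%N); case: (_ == b.+1); case: (wf g).
by rewrite big1 // => g _; rewrite muln0.
Qed.

Lemma walk0 m b : (b < m)%N -> walk_count m 0 0 b = (b == 0%N).
Proof.
move=> bm; rewrite walk_countE big_ffsnoc.
have e : forall g : {ffun 'I_1 -> 'I_m}, wf g.
  by move=> g; apply/forallP => -[].
rewrite (eq_bigr (fun g => (b == 0%N) : nat)).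
  by rewrite sum_nat_const card_ffun (card_ord 0) expn0 mul1n.
move=> g _.
rewrite (eq_bigr (fun x : 'I_m => (((x == b :> nat) && (x == 0%N :> nat)) : nat))); last first.
  move=> x _.
  have -> : (ord0 : 'I_1) = ord_max by apply: val_inj.
  by rewrite ffsnoc_max e andbT andbC.
by rewrite (sum_ord_eq (fun x => x == 0%N)).
Qed.

Close Scope ring_scope.

Lemma walk_lt m L b : (b < m)%N -> (L < b)%N -> walk_count m L 0 b = 0%N.
Proof.
elim: L b => [|L IH] b bm Lb; first by rewrite walk0 //; case: b Lb {bm}.
rewrite walkS //.
rewrite (IH b.-1); [|lia|lia].
rewrite if_same add0n; case: ifP => // b1; apply: IH => //; lia.
Qed.

Definition U m u b := walk_count m (b + u.*2) 0 b.

Lemma Urec m u b : (b < m)%N ->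
  U m u b = ((b == 0%N) && (u == 0%N) : nat) +
            (if (0 < b)%N then U m u b.-1 else 0) +
            (if (0 < u)%N && (b.+1 < m)%N then U m u.-1 b.+1 else 0).
Proof.
move=> bm; rewrite /U.
case: b bm => [|b] bm; case: u => [|u] /=.
- by rewrite walk0.
- rewrite -addnn addSn addnS walkS // /= add0n.
  case: ifP => // bm1.
  by congr walk_count; lia.
- rewrite double0 add0n !addn0 walkS //.
  case: ifP => bm1; last by rewrite addn0.
  rewrite (walk_lt (L:=b) (b:=b.+2)) //.
  by rewrite addn0.
- rewrite add0n -!addnn !addnS addSn walkS // add0n; congr addn.
Qed.

Open Scope ring_scope.

Definition eqN (N : nat) (p q : {poly int}) := forall i, (i < N)%N -> p`_i = q`_i.

Definition Hp m N b : {poly int} := \poly_(u < N) (U m u b)%:Z.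

Lemma Hrec m N b : (b < m)%N ->
  Hp m N.+1 b = ((b == 0%N) : nat)%:Z%:P + (if (0 < b)%N then Hp m N.+1 b.-1 else 0)
     + (if (b.+1 < m)%N then 'X * Hp m N b.+1 else 0).
Proof.
move=> bm; apply/polyP => i.
rewrite !coefD coefC !coef_poly (Urec i bm) !PoszD.
case H: (b.+1 < m)%N; case: (posnP b) => [b0|bp]; rewrite ?b0 /=;
  rewrite ?coef0 ?coefXM ?coef_poly; case: i => [|i] /=; rewrite ?ltnS;
  try reflexivity; try by case: ltnP; rewrite ?addr0 ?add0r.
Qed.

Lemma pp_rec c : pp c.+2 + 'X * pp c = pp c.+1.
Proof. by rewrite ppSS subrK. Qed.

Lemma pp_key m b : (b < m)%N ->
  pp m * (((b == 0%N) : nat)%:Z)%:P + (if (0 < b)%N then pp (m - 1 - b.-1) else 0)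
    + (if (b.+1 < m)%N then 'X * pp (m - 1 - b.+1) else 0) = pp (m - 1 - b).
Proof.
move=> bm; case: b bm => [|b] bm.
  have -> : (0 < 0)%N = false by [].
  rewrite eqxx mulr1 addr0 subn0.
  case: m bm => [|[|c]] _ //; first by rewrite addr0.
  have -> : (c.+2 - 1 - 1 = c)%N by lia.
  have -> : (c.+2 - 1 = c.+1)%N by lia.
  have -> : (1 < c.+2)%N by [].
  by rewrite pp_rec.
have -> : (b.+1 == 0%N) = false by [].
have -> : (0 < b.+1)%N = true by [].
rewrite mulr0 add0r.
case: ltnP => bm1.
  have -> : (m - 1 - b = (m - 1 - b.+2).+2)%N by lia.
  have -> : (m - 1 - b.+1 = (m - 1 - b.+2).+1)%N by lia.
  by rewrite pp_rec.
have -> : (m - 1 - b = 1)%N by lia.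
have -> : (m - 1 - b.+1 = 0)%N by lia.
by rewrite addr0.
Qed.

Lemma Hp_inv m N b : (b < m)%N -> eqN N (pp m * Hp m N b) (pp (m - 1 - b)).
Proof.
elim: N b => [|N IHN] b bm i iN //.
elim: b bm => [|b IHb] bm.
  rewrite Hrec // -(pp_key bm) !mulrDr !coefD; congr (_ + _ + _).
    by rewrite mulr0.
  case: ifP => bm1; last by rewrite mulr0.
  rewrite mulrCA !coefXM; case: i iN => [|i] iN //.
  by rewrite IHN.
rewrite Hrec // -(pp_key bm) !mulrDr !coefD; congr (_ + _ + _).
  by rewrite IHb //; apply: ltnW.
case: ifP => bm1; last by rewrite mulr0.
rewrite mulrCA !coefXM; case: i iN {IHb} => [|i] iN //.
by rewrite IHN.
Qed.

Open Scope ring_scope.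

Lemma fps_coefE (num den D : {poly int}) r :
  den`_0 = 1 -> eqN r.+1 (den * D) num -> fps_coef num den r = D`_r.
Proof.
move=> d0 e.
have H : forall n, (n <= r.+1)%N -> sdiv_seq num den n = [seq D`_i | i <- iota 0 n].
  elim=> [|n IH] nr; first by [].
  have -> : iota 0 n.+1 = rcons (iota 0 n) n by rewrite -cats1 -addn1 iotaD.
  rewrite map_rcons.
  have -> : sdiv_seq num den n.+1 = rcons (sdiv_seq num den n)
     (num`_n - \sum_(1 <= i < n.+1) den`_i * (sdiv_seq num den n)`_(n - i)) by [].
  rewrite IH ?(ltnW nr) //; congr rcons.
  rewrite -(e n nr) coefM big_ord_recl d0 mul1r subn0.
  rewrite big_add1 /= big_mkord.
  rewrite [X in _ - X](eq_bigr (fun i : 'I_n => den`_(bump 0 i) * D`_(n - bump 0 i))) ?addrK //.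
  move=> i _; rewrite /bump /= add1n; congr (_ * _).
  rewrite (nth_map 0%N); last by rewrite size_iota; move: (ltn_ord i) nr; lia.
  rewrite nth_iota ?add0n //; move: (ltn_ord i) nr; lia.
by rewrite /fps_coef H // (nth_map 0%N) ?size_iota // nth_iota.
Qed.

Open Scope ring_scope.

Lemma eqN_mul N a b c d : eqN N a b -> eqN N c d -> eqN N (a * c) (b * d).
Proof.
move=> ab cd i iN; rewrite !coefM; apply: eq_bigr => j _.
rewrite ab ?cd //.
  by apply: leq_ltn_trans iN; apply: leq_subr.
by apply: leq_ltn_trans iN; rewrite -ltnS.
Qed.

Lemma eqN_refl N a : eqN N a a. Proof. by []. Qed.

Lemma eqN_trans N a b c : eqN N a b -> eqN N b c -> eqN N a c.
Proof. by move=> ab bc i iN; rewrite ab ?bc. Qed.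

Lemma eqN_exp N a k : eqN N a 1 -> eqN N (a ^+ k) 1.
Proof.
move=> a1; elim: k => [|k IH]; first by [].
rewrite exprS -(mulr1 1); exact: eqN_mul.
Qed.

Lemma coef0_pp_exp m n : (pp m ^+ n)`_0 = 1.
Proof.
elim: n => [|n IH]; first by rewrite expr0 coefC.
by rewrite exprS coef0M IH coef_pp bin0 mulr1.
Qed.

Lemma Bp_inv m r : (0 < m)%N -> eqN r.+1 (pp m * Hp m r.+1 m.-1) 1.
Proof.
move=> m0; have h : (m.-1 < m)%N by lia.
have := Hp_inv (N := r.+1) h.
have -> : (m - 1 - m.-1 = 0)%N by lia.
by [].
Qed.

Lemma prod_filter_m m xi : all (fun x => (0 < x <= m)%N) xi ->
  \prod_(a <- xi | ~~ (a < m)%N) pp a = pp m ^+ count_mem m xi.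
Proof.
elim: xi => [|x xi IH]; first by rewrite big_nil.
rewrite /= big_cons => /andP [/andP [x0 xm] /IH ->].
case: ltnP => xm'.
  have -> : (x == m) = false by apply/negbTE; lia.
  by rewrite add0n.
have -> : x = m by lia.
by rewrite eqxx add1n exprS.
Qed.

Open Scope ring_scope.

Lemma Posz_prod (I : Type) (s : seq I) (F : I -> nat) :
  (\prod_(i <- s) F i)%N%:Z = \prod_(i <- s) (F i)%:Z.
Proof. exact: (big_morph Posz PoszM (erefl 1%:Z)). Qed.

Lemma main_gen (cf : nat -> nat -> nat) (hcf : forall a j, cf a j = 'C(a - j, j))
  (m : nat) (xi : seq nat) (mu : nat) :
  (1 <= m)%N ->
  all (fun x => (0 < x <= m)%N) xi ->
  let mu1 := (mu %/ m)%N in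
  let mu0 := (mu %% m)%N in
  let t := count_mem m xi in
  (t <= mu1.+1)%N ->
  let k := (mu1.+1 - t)%N in
  let alpha := ((m - mu0 - 1)%N :: filter (fun x => (x < m)%N) xi) in
  let L1 := size alpha in
  forall r : nat,
  let a := fps_coef (pp (m - mu0 - 1) * pxi xi) (pp m ^+ mu1.+1) r in
  a = \sum_(j : {ffun 'I_L1 -> 'I_r.+1})
        \sum_(u : {ffun 'I_k -> 'I_r.+1}
                | ((\sum_(i < L1) (j i : nat)) + (\sum_(v < k) (u v : nat)) == r)%N)
          (-1) ^+ (\sum_(i < L1) (j i : nat))%N
          * (\prod_(i < L1) cf (nth 0%N alpha i) (j i))%N%:Z
          * (\prod_(v < k) Bm m (u v))%N%:Z.
Proof.
move=> m1 hall mu1 mu0 t tle k alpha L1 r a.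
set PA := \prod_(i < L1) pp (nth 0%N alpha i).
set Bp := Hp m r.+1 m.-1.
have hPA : PA = \prod_(x <- alpha) pp x by rewrite /PA [RHS](big_nth 0%N) big_mkord.
have hnum : pp (m - mu0 - 1) * pxi xi = PA * pp m ^+ t.
  rewrite hPA /pxi (bigID (fun a => a < m)%N) /= prod_filter_m // -big_filter.
  by rewrite big_cons mulrA.
have hden : pp m ^+ mu1.+1 = pp m ^+ t * pp m ^+ k.
  by rewrite -exprD; congr (_ ^+ _); rewrite /k; lia.
have ha : a = (PA * Bp ^+ k)`_r.
  apply: fps_coefE; first exact: coef0_pp_exp.
  rewrite hnum hden mulrACA [pp m ^+ t * PA]mulrC -exprMn.
  rewrite -{2}(mulr1 (PA * pp m ^+ t)); apply: eqN_mul => //; apply: eqN_exp.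
  exact: Bp_inv.
rewrite ha.
have -> : Bp ^+ k = \prod_(v < k) Bp by rewrite prodr_const card_ord.
have hA : forall j : {ffun 'I_L1 -> 'I_r.+1},
   (-1) ^+ (\sum_(i < L1) (j i : nat))%N * (\prod_(i < L1) cf (nth 0%N alpha i) (j i))%N%:Z
   = \prod_(i < L1) (pp (nth 0%N alpha i))`_(j i).
  move=> j; rewrite expr_sum Posz_prod -big_split /=; apply: eq_bigr => i _.
  by rewrite coef_pp hcf.
have hB : forall u : {ffun 'I_k -> 'I_r.+1},
   (\prod_(v < k) Bm m (u v))%N%:Z = \prod_(v < k) Bp`_(u v).
  move=> u; rewrite Posz_prod; apply: eq_bigr => v _.
  by rewrite /Bp /Hp coef_poly ltn_ord.
under [RHS]eq_bigr => j _ do under eq_bigr => u _ do rewrite hA hB.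
rewrite coefM.
rewrite (eq_bigr (fun s : 'I_r.+1 =>
   \sum_(j : {ffun 'I_L1 -> 'I_r.+1} | (\sum_(i<L1) (j i : nat) == s)%N)
   \sum_(u : {ffun 'I_k -> 'I_r.+1} | (\sum_(v<k) (u v : nat) == r - s)%N)
     (\prod_(i<L1) (pp (nth 0%N alpha i))`_(j i)) * \prod_(v<k) Bp`_(u v))); last first.
  move=> s _; rewrite (coef_prod_ffun (N:=r)); last exact: leq_subr.
  rewrite /PA (coef_prod_ffun (N:=r)); last by rewrite -ltnS ltn_ord.
  rewrite mulr_suml; apply: eq_bigr => j _; by rewrite mulr_sumr.
rewrite (exchange_big_dep xpredT) //=; apply: eq_bigr => j _.
rewrite (eq_bigl (fun s : 'I_r.+1 => (s : nat) == \sum_(i<L1) (j i : nat))%N); last first.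
  by move=> s; rewrite eq_sym.
rewrite (big_ord1_eq _ (fun s => \sum_(u : {ffun 'I_k -> 'I_r.+1} | (\sum_(v<k) (u v : nat) == r - s)%N)
     (\prod_(i<L1) (pp (nth 0%N alpha i))`_(j i)) * \prod_(v<k) Bp`_(u v))).
rewrite ltnS; case: leqP => sr.
  apply: eq_bigl => u.
  move: sr; move: (\sum_(i < L1) _)%N (\sum_(v < k) _)%N => x y sr.
  by apply/eqP/eqP; lia.
rewrite big_pred0 // => u.
move: sr; move: (\sum_(i < L1) _)%N (\sum_(v < k) _)%N => x y sr.
by apply/eqP; lia.
Qed.

Close Scope ring_scope.

Definition endc n (f : {ffun 'I_n -> bool}) := [forall i : 'I_n, f i ==> (i.+1 < n)].
Definition ncf n (f : {ffun 'I_n -> bool}) :=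
  [forall i : 'I_n, forall i' : 'I_n, (f i && f i') ==> (val i' != (val i).+1)].
Definition lastb n (f : {ffun 'I_n -> bool}) := [exists i : 'I_n, (i.+1 == n) && f i].

Definition cc n j := \sum_(f : {ffun 'I_n -> bool}) ((endc f && ncf f && (\sum_i (f i : nat) == j)) : nat).
Definition dd n j := \sum_(f : {ffun 'I_n -> bool}) ((ncf f && (\sum_i (f i : nat) == j)) : nat).

Lemma endc_lastb n (f : {ffun 'I_n -> bool}) : endc f = ~~ lastb f.
Proof.
rewrite /endc /lastb negb_exists; apply: eq_forallb => i.
have := ltn_ord i; case: (f i); rewrite ?andbF ?andbT //= => h.
by rewrite ltn_neqAle h andbT.
Qed.

Lemma sum_ffsnoc n (g : {ffun 'I_n -> bool}) x :
  (\sum_(i < n.+1) (ffsnoc g x i : nat) = \sum_(i < n) (g i : nat) + x)%N.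
Proof. exact: (big_ord_ffsnoc _ _ _ (fun _ (y : bool) => (y : nat))). Qed.

Lemma endc_ffsnoc n (g : {ffun 'I_n -> bool}) x : endc (ffsnoc g x) = ~~ x.
Proof.
rewrite /endc forall_ord_recr ffsnoc_max /= ltnn implybF.
apply/andP/idP => [[_ //]| nx]; split=> //; apply/forallP => i.
by rewrite ffsnoc_widen /= ltnS ltn_ord implybT.
Qed.

Lemma lift_max_widen n (j : 'I_n) : lift ord_max j = widen_ord (leqnSn n) j.
Proof. by apply: val_inj; rewrite /= /bump leqNgt ltn_ord. Qed.

Lemma ncf_ffsnoc n (g : {ffun 'I_n -> bool}) x :
  ncf (ffsnoc g x) = ncf g && ~~ (x && lastb g).
Proof.
apply/idP/andP.
  move=> /forallP H; split.
    apply/forallP => i; apply/forallP => i'.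
    by have /forallP := H (widen_ord (leqnSn n) i) => /(_ (widen_ord (leqnSn n) i'));
      rewrite !ffsnoc_widen.
  apply/negP => /andP [xx /existsP [i /andP [/eqP ein gi]]].
  have /forallP := H (widen_ord (leqnSn n) i) => /(_ ord_max).
  by rewrite ffsnoc_widen ffsnoc_max gi xx /= ein eqxx.
move=> [/forallP H nl]; apply/forallP => i; apply/forallP => i'.
case: (unliftP ord_max i) => [j ->|->]; last first.
  by apply/implyP => _; have := ltn_ord i'; rewrite /= neq_ltn => ->.
rewrite lift_max_widen ffsnoc_widen.
case: (unliftP ord_max i') => [j' ->|->].
  by rewrite lift_max_widen ffsnoc_widen /=; have /forallP := H j; apply.
rewrite ffsnoc_max /=; apply/implyP => /andP [gj xx]; apply/eqP => ej.
move: nl; rewrite xx /=; move/negP; apply; apply/existsP; exists j.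
by rewrite gj -ej eqxx.
Qed.

Lemma ffun0_sum (T : finType) (F : {ffun 'I_0 -> T} -> nat) (f0 : {ffun 'I_0 -> T}) :
  (\sum_(f : {ffun 'I_0 -> T}) F f = F f0)%N.
Proof.
rewrite (big_pred1 f0) // => f /=; apply/esym/eqP/ffunP => -[? //].
Qed.

Lemma cc0 j : cc 0 j = (j == 0%N).
Proof.
rewrite /cc (ffun0_sum _ [ffun i : 'I_0 => false]) big_ord0.
have -> : endc [ffun i : 'I_0 => false] by apply/forallP => -[? //].
have -> : ncf [ffun i : 'I_0 => false] by apply/forallP => -[? //].
by rewrite eq_sym.
Qed.

Lemma dd0 j : dd 0 j = (j == 0%N).
Proof.
rewrite /dd (ffun0_sum _ [ffun i : 'I_0 => false]) big_ord0.
have -> : ncf [ffun i : 'I_0 => false] by apply/forallP => -[? //].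
by rewrite eq_sym.
Qed.

Lemma ccS n j : cc n.+1 j = dd n j.
Proof.
rewrite /cc big_ffsnoc; apply: eq_bigr => g _.
rewrite big_bool /= !endc_ffsnoc ncf_ffsnoc !sum_ffsnoc /= addn0 add0n.
by rewrite !ncf_ffsnoc /= andbT.
Qed.

Lemma ddS n j : dd n.+1 j = (dd n j + (if j is j'.+1 then cc n j' else 0))%N.
Proof.
rewrite /dd /cc big_ffsnoc.
case: j => [|j].
  rewrite addn0; apply: eq_bigr => g _.
  rewrite big_bool /= !ncf_ffsnoc !sum_ffsnoc /= addn0 addn1 /= andbT.
  by rewrite andbF.
rewrite -big_split /=; apply: eq_bigr => g _.
rewrite big_bool /= !ncf_ffsnoc !sum_ffsnoc /= addn0 addn1 eqSS andbT endc_lastb.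
by rewrite addnC [~~ lastb g && _]andbC.
Qed.

Lemma cc_dd_closed n : (forall j, cc n j = 'C(n - j, j)) /\ (forall j, dd n j = 'C(n.+1 - j, j)).
Proof.
elim: n => [|n [IHc IHd]].
  split=> j; rewrite ?cc0 ?dd0; case: j => [|[|j]] //.
split=> j; first by rewrite ccS IHd.
rewrite ddS; case: j => [|j]; first by rewrite IHd !bin0.
by rewrite IHd IHc subSS subSS binom_step.
Qed.

Close Scope ring_scope.

Definition goodS n (S : {set 'I_n}) :=
  endc [ffun i => i \in S] && ncf [ffun i => i \in S].

Lemma count_goodS n j :
  #|[set S : {set 'I_n} | goodS S && (#|S| == j)]| = cc n j.
Proof.
rewrite card_set_sum /cc.
rewrite (reindex (fun f : {ffun 'I_n -> bool} => [set i | f i])) /=; last first.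
  exists (fun S : {set 'I_n} => [ffun i => i \in S]) => [f _|S _].
    by apply/ffunP => i; rewrite ffunE inE.
  by apply/setP => i; rewrite inE ffunE.
apply: eq_bigr => f _; rewrite /goodS.
have -> : [ffun i => i \in [set i0 | f i0]] = f by apply/ffunP => i; rewrite ffunE inE.
by rewrite card_set_sum.
Qed.

Section M.
Variable n : nat.
Implicit Types M : {set 'I_n * 'I_n}.

Lemma match_edge M e : is_matching M -> e \in M -> val e.2 = (val e.1).+1.
Proof. by move=> /andP [/forallP H _] eM; have /implyP/(_ eM)/eqP := H e. Qed.

Lemma match_disj M e1 e2 : is_matching M -> e1 \in M -> e2 \in M -> e1 != e2 ->
  [&& e1.1 != e2.1, e1.1 != e2.2, e1.2 != e2.1 & e1.2 != e2.2].
Proof.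
move=> /andP [_ /forallP H] e1M e2M ne.
have /implyP/(_ e1M)/forallP/(_ e2)/implyP/(_ e2M)/implyP/(_ ne) := H e1. done.
Qed.

Lemma match_inj1 M e1 e2 : is_matching M -> e1 \in M -> e2 \in M -> e1.1 = e2.1 -> e1 = e2.
Proof.
move=> mM e1M e2M h; have h2 : e1.2 = e2.2.
  by apply: val_inj; rewrite (match_edge mM e1M) (match_edge mM e2M) h.
by case: e1 e2 e1M e2M h h2 => [a b] [c d] _ _ /= -> ->.
Qed.

Definition Phi M : {set 'I_n} := [set e.1 | e in M].

Lemma card_Phi M : is_matching M -> #|Phi M| = #|M|.
Proof. by move=> mM; apply: card_in_imset => e1 e2 e1M e2M; exact: (match_inj1 mM). Qed.

Lemma pair_eq2 (e e' : 'I_n * 'I_n) : e.1 = e'.1 -> val e.2 = val e'.2 -> e = e'.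
Proof. by case: e e' => [a b] [c d] /= -> /val_inj ->. Qed.

Lemma Phi_sub M M' : is_matching M -> is_matching M' -> Phi M \subset Phi M' -> M \subset M'.
Proof.
move=> mM mM' /subsetP s; apply/subsetP => e eM.
have /s /imsetP [e' e'M' he] : e.1 \in Phi M by apply/imsetP; exists e.
suff -> : e = e' by [].
apply: pair_eq2 => //.
by rewrite (match_edge mM eM) (match_edge mM' e'M') he.
Qed.

Lemma Phi_inj M M' : is_matching M -> is_matching M' -> Phi M = Phi M' -> M = M'.
Proof.
move=> mM mM' e; apply/eqP; rewrite eqEsubset.
by rewrite !Phi_sub // e subxx.
Qed.

Lemma Phi_good M : is_matching M -> goodS (Phi M).
Proof.
move=> mM; apply/andP; split.
  apply/forallP => i; rewrite ffunE; apply/implyP => /imsetP [e eM ->].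
  by rewrite -(match_edge mM eM) ltn_ord.
apply/forallP => i; apply/forallP => i'; rewrite !ffunE.
apply/implyP => /andP [/imsetP [e eM ->] /imsetP [e' e'M ->]]; apply/eqP => h.
have ne : e != e'.
  by apply/eqP => ee; move: h; rewrite ee; lia.
have /and4P [_ _ /eqP c _] := match_disj mM eM e'M ne.
by apply: c; apply: val_inj; rewrite (match_edge mM eM) h.
Qed.

Definition MS (S : {set 'I_n}) : {set 'I_n * 'I_n} :=
  [set e | (e.1 \in S) && (val e.2 == (val e.1).+1)].

Lemma MS_matching S : goodS S -> is_matching (MS S).
Proof.
move=> /andP [_ /forallP nc]; apply/andP; split.
  by apply/forallP => e; apply/implyP; rewrite inE => /andP [_].
apply/forallP => e1; apply/implyP; rewrite inE => /andP [e1S /eqP h1].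
apply/forallP => e2; apply/implyP; rewrite inE => /andP [e2S /eqP h2].
apply/implyP => ne.
have adj : forall a b : 'I_n, a \in S -> b \in S -> val b = (val a).+1 -> False.
  move=> a b aS bS ab; have /forallP/(_ b)/implyP := nc a.
  by rewrite !ffunE aS bS ab eqxx => /(_ isT).
apply/and4P; split; apply/eqP => h.
- by move/eqP: ne; apply; apply: pair_eq2 => //; rewrite h1 h2 h.
- by apply: (adj e2.1 e1.1) => //; rewrite h -h2.
- by apply: (adj e1.1 e2.1) => //; rewrite -h h1.
- by move/eqP: ne; apply; apply: pair_eq2; [apply: val_inj; apply/eq_add_S; rewrite -h1 -h2 h | rewrite h].
Qed.

Lemma Phi_MS S : goodS S -> Phi (MS S) = S.
Proof.
move=> /andP [/forallP ec _]; apply/setP => i; apply/imsetP/idP.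
  by move=> [e]; rewrite inE => /andP [eS _] ->.
move=> iS; have := ec i; rewrite ffunE iS /= => lt.
by exists (i, Ordinal lt); rewrite // inE /= iS eqxx.
Qed.

Lemma n_matchings_good j :
  n_matchings n j = #|[set S : {set 'I_n} | goodS S && (#|S| == j)]|.
Proof.
rewrite /n_matchings -(card_in_imset (f := Phi)); last first.
  by move=> M M'; rewrite !inE => /andP [mM _] /andP [mM' _]; apply: Phi_inj.
apply: eq_card => S; rewrite [RHS]inE; apply/imsetP/idP.
  move=> [M]; rewrite inE => /andP [mM /eqP cM] ->.
  by rewrite Phi_good // card_Phi // cM eqxx.
move=> /andP [gS /eqP cS]; exists (MS S); last by rewrite Phi_MS.
by rewrite inE MS_matching //= -card_Phi ?MS_matching // Phi_MS // cS eqxx.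
Qed.
End M.

Lemma n_matchingsE n j : n_matchings n j = 'C(n - j, j).
Proof.
by rewrite n_matchings_good count_goodS; case: (cc_dd_closed n).
Qed.

Open Scope ring_scope.
Theorem theorem1p2 (m : nat) (xi : seq nat) (mu : nat) :
  (1 <= m)%N ->
  all (fun x => (0 < x <= m)%N) xi -> sorted geq xi ->
  let mu1 := (mu %/ m)%N in
  let mu0 := (mu %% m)%N in
  let t := count_mem m xi in
  (t <= mu1.+1)%N ->
  let k := (mu1.+1 - t)%N in
  let alpha := ((m - mu0 - 1)%N :: filter (fun x => (x < m)%N) xi) in
  let L1 := size alpha in
  forall r : nat,
  let a := fps_coef (pp (m - mu0 - 1) * pxi xi) (pp m ^+ mu1.+1) r in
  a = \sum_(j : {ffun 'I_L1 -> 'I_r.+1})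
        \sum_(u : {ffun 'I_k -> 'I_r.+1}
                | ((\sum_(i < L1) (j i : nat)) + (\sum_(v < k) (u v : nat)) == r)%N)
          (-1) ^+ (\sum_(i < L1) (j i : nat))%N
          * (\prod_(i < L1) 'C(nth 0%N alpha i - j i, j i))%N%:Z
          * (\prod_(v < k) Bm m (u v))%N%:Z
  /\
  a = \sum_(j : {ffun 'I_L1 -> 'I_r.+1})
        \sum_(u : {ffun 'I_k -> 'I_r.+1}
                | ((\sum_(i < L1) (j i : nat)) + (\sum_(v < k) (u v : nat)) == r)%N)
          (-1) ^+ (\sum_(i < L1) (j i : nat))%N
          * (\prod_(i < L1) n_matchings (nth 0%N alpha i) (j i))%N%:Z
          * (\prod_(v < k) Bm m (u v))%N%:Z.
Proof.
move=> m1 hall _ mu1 mu0 t tle k alpha L1 r a; split.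
  have H := (main_gen (cf := fun a j => 'C(a - j, j)) (fun _ _ => erefl) m1 hall tle r).
  exact H.
have H := (main_gen (cf := n_matchings) n_matchingsE m1 hall tle r).
exact H.
Qed.
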